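(* Let $M$ be a commutative ind-monoid split with respect to a line bundle $L$, and let $N\subseteq M$ be a submonoid. Then the ideal $I_N\subseteq \mathcal{R}(M,L)$ of sections vanishing on $N$ is spanned, as a complex vector space, by differences of characters $\chi_i-\chi_j$ (with $\chi_i,\chi_j$ characters of $M$ such that $\chi_i-\chi_j$ vanishes on $N$).
   Context: An ind-variety is a set $X$ with a filtration $X_0\subset X_1\subset\cdots$ by finite-dimensional algebraic varieties, each inclusion a closed embedding. A line bundle $L$ on $X$ is a compatible family of line bundles $L_n$ on $X_n$; a section is a compatible family of sections; $\mathcal{R}(X,L)=\varprojlim \mathcal{R}(X_n,L_n)$. An ind-monoid is an ind-variety $M=\bigcup M_g$ with associative multiplication maps $m_{g,h}:M_g\times M_h\to M_{g+h}$ compatible with restrictions, and an identity; commutative if the multiplication is. $M$ is split with respect to $L$ if (1) $m_{g,h}^*L_{g+h}\cong pr_1^*L_g\otimes pr_2^*L_h$ for all $g,h$, and (2) $\mathcal{R}(M,L)$ is spanned as a vector space by characters, a section $\chi$ being a character if $m_{g,h}^*\chi_{g+h}=\chi_g\chi_h$ for all $g,h$. A submonoid is a sub-ind-variety closed under multiplication containing the identity. *)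

(* Defs.v *)
From mathcomp Require Import all_boot all_algebra complex.
From mathcomp Require Import Rstruct.
Set Implicit Arguments. Unset Strict Implicit. Unset Printing Implicit Defensive.
Import GRing.Theory.
Local Open Scope ring_scope.

Definition Cplx : fieldType := (Rdefinitions.R)[i].

(* A commutative ind-monoid M = \bigcup_g M_g (filtration indexed by nat), with a
   line bundle L = (L_g)_g, recorded pointwise:
   - [lev g x] means x \in M_g;
   - the fibres of L are trivialised pointwise (identified with Cplx), so a
     section of L_g is a function on points with values in Cplx;
   - [regular g s] means that the restriction of s to M_g is a (regular) section
     of L_g; it only depends on the values of s on M_g, the regular sections
     form a vector space, and restriction M_{g+1} -> M_g preserves regularity;
   - the isomorphism m_{g,h}^* L_{g+h} ~= pr_1^* L_g (x) pr_2^* L_h of the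
     splitting condition (1) is recorded by its (nonzero) value
     [split_iso g h x y] on the fibres at (x,y) \in M_g x M_h. *)
Record indMonoidLB := IndMonoidLB {
  pt : Type;
  lev : nat -> pt -> Prop;
  lev_mono : forall g x, lev g x -> lev g.+1 x;
  lev_cover : forall x, exists g, lev g x;
  mul : pt -> pt -> pt;
  one : pt;
  lev_one : exists g, lev g one;
  lev_mul : forall g h x y, lev g x -> lev h y -> lev (g + h)%N (mul x y);
  mulA : forall x y z, mul x (mul y z) = mul (mul x y) z;
  mul1x : forall x, mul one x = x;
  mulx1 : forall x, mul x one = x;
  regular : nat -> (pt -> Cplx) -> Prop;
  regular_local : forall g s t, (forall x, lev g x -> s x = t x) ->
                   regular g s -> regular g t;
  regular0 : forall g, regular g (fun _ => 0);
  regularD : forall g s t, regular g s -> regular g t ->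
               regular g (fun x => s x + t x);
  regularZ : forall g (a : Cplx) s, regular g s -> regular g (fun x => a * s x);
  regular_restr : forall g s, regular g.+1 s -> regular g s;
  split_iso : nat -> nat -> pt -> pt -> Cplx;
  split_iso_neq0 : forall g h x y, lev g x -> lev h y -> split_iso g h x y != 0
}.

Definition commutative_im (M : indMonoidLB) : Prop :=
  forall x y : pt M, mul x y = mul y x.

(* R(M, L) = lim R(M_g, L_g): compatible families of sections *)
Definition section (M : indMonoidLB) (s : pt M -> Cplx) : Prop :=
  forall g, regular g s.

(* characters: m_{g,h}^* chi_{g+h} = chi_g chi_h for all g, h *)
Definition character (M : indMonoidLB) (chi : pt M -> Cplx) : Prop :=
  section chi /\
  forall g h x y, lev g x -> lev h y ->
    chi (mul x y) = split_iso g h x y * (chi x * chi y).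

Definition lincomb (T : Type) (l : seq (Cplx * (T -> Cplx))) : T -> Cplx :=
  fun x => \sum_(p <- l) p.1 * p.2 x.

(* M is split with respect to L: (1) is built into [indMonoidLB]; (2) says
   that R(M, L) is spanned by characters. *)
Definition split_wrt_L (M : indMonoidLB) : Prop :=
  forall s, section s ->
    exists l : seq (Cplx * (pt M -> Cplx)),
      (forall p, List.In p l -> character p.2) /\ s = lincomb l.

(* A submonoid: a sub-ind-variety (N_g := N \cap M_g) closed under
   multiplication and containing the identity. *)
Definition submonoid (M : indMonoidLB) (N : pt M -> Prop) : Prop :=
  N (@one M) /\ forall x y, N x -> N y -> N (mul x y).

Definition vanishes_on (M : indMonoidLB) (N : pt M -> Prop) (s : pt M -> Cplx) :=
  forall x, N x -> s x = 0.

Definition ideal_IN (M : indMonoidLB) (N : pt M -> Prop) (s : pt M -> Cplx) :=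
  section s /\ vanishes_on N s.

(* Main.v *)
Require Import Defs.
From mathcomp Require Import all_boot all_algebra complex.
From mathcomp Require Import Rstruct.
From mathcomp Require Import ring.
From Stdlib Require Import FunctionalExtensionality Classical.
Import GRing.Theory.
Local Open Scope ring_scope.

Section Aux.
Variable M : indMonoidLB.
Variable N : pt M -> Prop.

Lemma In_map (A B : Type) (f : A -> B) (l : seq A) x :
  List.In x l -> List.In (f x) (map f l).
Proof. elim: l => [//|a l IH] /= [->|H]; [by left| by right; apply: IH]. Qed.

Lemma In_map_inv (A B : Type) (f : A -> B) (l : seq A) y :
  List.In y (map f l) -> exists x, List.In x l /\ y = f x.
Proof.
elim: l => [//|a l IH] /= [<-|H]; first by exists a; split; [left|].
by have [x [H1 H2]] := IH H; exists x; split; [right|].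
Qed.

Arguments In_map {A B} f {l x}.
Arguments In_map_inv {A B f l y}.

Lemma In_cat (A : Type) (l1 l2 : seq A) x :
  List.In x (l1 ++ l2) <-> List.In x l1 \/ List.In x l2.
Proof.
elim: l1 => [|a l IH] /=; first by split; [right|case].
rewrite IH; tauto.
Qed.

Lemma In_split_seq (A : Type) (l : seq A) x :
  List.In x l -> exists l1 l2, l = l1 ++ x :: l2.
Proof.
elim: l => [//|a l IH] /= [<-|H]; first by exists [::], l.
have [l1 [l2 ->]] := IH H; by exists (a :: l1), l2.
Qed.

Lemma sum_zero (A : Type) (l : seq A) (F : A -> Cplx) :
  (forall q, List.In q l -> F q = 0) -> \sum_(q <- l) F q = 0.
Proof.
elim: l => [|a l IH] H; first by rewrite big_nil.
rewrite big_cons H /=; last by left.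
by rewrite add0r IH // => q Hq; apply: H; right.
Qed.

Lemma sum_ext (A : Type) (l : seq A) (F G : A -> Cplx) :
  (forall q, List.In q l -> F q = G q) -> \sum_(q <- l) F q = \sum_(q <- l) G q.
Proof.
elim: l => [|a l IH] H; first by rewrite !big_nil.
rewrite !big_cons H /=; last by left.
by rewrite IH // => q Hq; apply: H; right.
Qed.

Lemma lincomb_cat (l1 l2 : seq (Cplx * (pt M -> Cplx))) x : lincomb (l1 ++ l2) x = lincomb l1 x + lincomb l2 x.
Proof. by rewrite /lincomb big_cat. Qed.

Lemma lincomb_cons a (f : pt M -> Cplx) l x : lincomb ((a, f) :: l) x = a * f x + lincomb l x.
Proof. by rewrite /lincomb big_cons. Qed.

Lemma lincomb_nil x : lincomb (T:=pt M) [::] x = 0.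
Proof. by rewrite /lincomb big_nil. Qed.

Fixpoint pdist (fs : seq (pt M -> Cplx)) : Prop :=
  match fs with
  | [::] => True
  | f :: r => (forall q, List.In q r -> exists y, N y /\ q y <> f y) /\ pdist r
  end.

Definition dsum (D : seq (Cplx * ((pt M -> Cplx) * (pt M -> Cplx)))) :=
  lincomb [seq (p.1, fun x => p.2.1 x - p.2.2 x) | p <- D].

Definition validD (D : seq (Cplx * ((pt M -> Cplx) * (pt M -> Cplx)))) :=
  forall p, List.In p D ->
    [/\ character p.2.1, character p.2.2 &
        vanishes_on N (fun x => p.2.1 x - p.2.2 x)].

Lemma dsum_cons a f g D x : dsum ((a, (f, g)) :: D) x = a * (f x - g x) + dsum D x.
Proof. by rewrite /dsum /= lincomb_cons. Qed.

Lemma dsum_cat D1 D2 x : dsum (D1 ++ D2) x = dsum D1 x + dsum D2 x.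
Proof. by rewrite /dsum map_cat lincomb_cat. Qed.

Lemma dsum_nil x : dsum [::] x = 0.
Proof. by rewrite /dsum /= lincomb_nil. Qed.

Lemma dsum_van D : validD D -> forall x, N x -> dsum D x = 0.
Proof.
move=> HD x Nx; rewrite /dsum /lincomb big_map; apply: sum_zero => q Hq.
by have [_ _ V] := HD q Hq; rewrite /= (V x Nx) mulr0.
Qed.

Lemma dsum_reg D : validD D -> forall g, regular g (dsum D).
Proof.
elim: D => [|[a [f h]] D IH] HD g.
  by apply: (regular_local (s := fun _ => 0)) (regular0 _ _) => x; rewrite dsum_nil.
have [[Hf _] [Hh _] _] := HD _ (or_introl erefl).
have H1 : regular g (fun x => f x + (-1) * h x) by apply: regularD; [apply Hf|apply: regularZ; apply Hh].
have H2 : regular g (fun x => a * (f x + (-1) * h x)) by apply: regularZ.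
have H3 : regular g (fun x => a * (f x + (-1) * h x) + dsum D x).
  by apply: regularD => //; apply: IH => p Hp; apply: HD; right.
by apply: (regular_local _ H3) => x _; rewrite dsum_cons mulN1r.
Qed.

Lemma zero_char : character (M:=M) (fun _ => 0).
Proof. split; first by move=> g; apply: regular0. by move=> *; rewrite !mulr0. Qed.

Lemma artin_gen (HN : submonoid N) (fs : seq (pt M -> Cplx)) :
  forall (l : seq (Cplx * (pt M -> Cplx))), map snd l = fs ->
  (forall p, List.In p l -> character p.2) -> pdist fs ->
  (forall x, N x -> lincomb l x = 0) ->
  forall p, List.In p l -> forall x, N x -> p.1 * p.2 x = 0.
Proof.
elim: fs => [|f fs IH] [|[a1 chi1] rest] //= [Hf Hfs]; subst f fs.
move=> Hch [Hd Hpr] Hsum.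
have Hrest : forall p, List.In p rest -> forall x, N x -> p.1 * p.2 x = 0.
  move=> p Hp.
  have [y [Ny Hy]] := Hd _ (In_map snd Hp).
  pose rest' := [seq (q.1 * (q.2 y - chi1 y), q.2) | q <- rest].
  have Hm : map snd rest' = map snd rest by rewrite -map_comp.
  have Hch' : forall p, List.In p rest' -> character p.2.
    move=> q /In_map_inv [q0 [Hq0 ->]] /=; by apply: (Hch q0); right.
  have Hsum' : forall x, N x -> lincomb rest' x = 0.
    move=> x Nx.
    have [gx Lx] := lev_cover x. have [gy Ly] := lev_cover y.
    have Nxy : N (Defs.mul x y) by apply: HN.2.
    have E0 := Hsum _ Nxy.
    have E1 := Hsum _ Nx.
    set c := split_iso gx gy x y in E0.
    have Hc : c != 0 by apply: split_iso_neq0.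
    have ET : a1 * (chi1 x * chi1 y) + \sum_(q <- rest) q.1 * (q.2 x * q.2 y) = 0.
      move: E0; rewrite lincomb_cons /lincomb.
      have -> : \sum_(q <- rest) q.1 * q.2 (Defs.mul x y) =
                c * \sum_(q <- rest) q.1 * (q.2 x * q.2 y).
        rewrite mulr_sumr; apply: sum_ext => q Hq.
        have [_ Hm'] := Hch q (or_intror Hq).
        by rewrite (Hm' _ _ _ _ Lx Ly) /c; ring.
      have [_ Hm1] := Hch _ (or_introl erefl).
      rewrite /= ((Hm1 _ _ _ _ Lx Ly) : chi1 (Defs.mul x y) = _) -/c => E.
      have : c * (a1 * (chi1 x * chi1 y) + \sum_(q <- rest) q.1 * (q.2 x * q.2 y)) = 0.
        rewrite -[RHS]E /=; ring.
      by move/eqP; rewrite mulf_eq0 (negbTE Hc) /= => /eqP.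
    move: E1; rewrite lincomb_cons /lincomb => E1.
    have -> : \sum_(p <- rest') p.1 * p.2 x =
      (a1 * (chi1 x * chi1 y) + \sum_(q <- rest) q.1 * (q.2 x * q.2 y))
      - chi1 y * (a1 * chi1 x + \sum_(p <- rest) p.1 * p.2 x).
      rewrite big_map mulrDr mulr_sumr.
      have -> : \sum_(q <- rest) q.1 * (q.2 y - chi1 y) * q.2 x =
         \sum_(q <- rest) (q.1 * (q.2 x * q.2 y) - chi1 y * (q.1 * q.2 x)).
        by apply: sum_ext => q _; ring.
      rewrite sumrB; ring.
    by rewrite ET E1; ring.
  have := IH rest' Hm Hch' Hpr Hsum' (p.1 * (p.2 y - chi1 y), p.2).
  move=> /(_ (In_map _ Hp)) H x Nx; have /eqP := H x Nx.
  rewrite /= -mulrA [(_ - _) * _]mulrC mulrA mulf_eq0 => /orP [/eqP //|].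
  by rewrite subr_eq0 => /eqP.
move=> p [<-|Hp]; last by apply: Hrest.
move=> x Nx /=; have := Hsum x Nx; rewrite lincomb_cons /lincomb sum_zero.
  by rewrite addr0.
by move=> q Hq; apply: Hrest.
Qed.

Lemma artin (HN : submonoid N) (l : seq (Cplx * (pt M -> Cplx))) :
  (forall p, List.In p l -> character p.2) -> pdist (map snd l) ->
  (forall x, N x -> lincomb l x = 0) ->
  forall p, List.In p l -> forall x, N x -> p.1 * p.2 x = 0.
Proof. by move=> *; apply: (@artin_gen HN (map snd l) l). Qed.

Lemma reduce (l : seq (Cplx * (pt M -> Cplx))) :
  (forall p, List.In p l -> character p.2) ->
  exists D (l' : seq (Cplx * (pt M -> Cplx))),
    [/\ validD D, (forall p, List.In p l' -> character p.2),
        pdist (map snd l') & forall x, lincomb l x = dsum D x + lincomb l' x].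
Proof.
elim: l => [|[a chi] rest IH] Hch.
  exists [::], [::]; split => //= x; by rewrite dsum_nil lincomb_nil addr0.
have [D [l' [HD Hl' Hp Hs]]] := IH (fun p Hp => Hch p (or_intror Hp)).
have Hchi : character chi := Hch _ (or_introl erefl).
case: (classic (exists q, List.In q l' /\ forall y, N y -> q.2 y = chi y)).
  move=> [[b psi] [Hq Heq]].
  have [l1 [l2 El]] := In_split_seq _ _ _ Hq.
  exists ((a, (chi, psi)) :: D), (l1 ++ (b + a, psi) :: l2); split.
  - move=> p /= [<-|HpD]; last by apply: HD.
    split => //=; first by apply: (Hl' _ Hq).
    by move=> y Ny; rewrite /= (Heq y Ny : psi y = chi y) subrr.
  - move=> p /In_cat [Hp1|/= [<-|Hp2]]; apply: (Hl' p) || apply: (Hl' (b, psi)); rewrite El In_cat /=; tauto.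
  - move: Hp; rewrite El !map_cat //.
  - move=> x; rewrite lincomb_cons Hs El dsum_cons !lincomb_cat !lincomb_cons /=; ring.
move=> Hno.
exists D, ((a, chi) :: l'); split => //.
- by move=> p /= [<-|HpD]; [|apply: Hl'].
- split => // q /In_map_inv [p [Hp' ->]].
  apply: NNPP => H; apply: Hno; exists p; split => // y Ny.
  apply: NNPP => H2; apply: H; by exists y.
- move=> x; rewrite !lincomb_cons Hs; ring.
Qed.

Lemma finish (l : seq (Cplx * (pt M -> Cplx))) :
  (forall p, List.In p l -> character p.2) ->
  (forall p, List.In p l -> forall x, N x -> p.1 * p.2 x = 0) ->
  exists D, validD D /\ forall x, lincomb l x = dsum D x.
Proof.
elim: l => [|[a chi] rest IH] Hch Hv.
  by exists [::]; split => // x; rewrite dsum_nil lincomb_nil.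
have [D [HD Hs]] := IH (fun p Hp => Hch p (or_intror Hp)) (fun p Hp => Hv p (or_intror Hp)).
have Hchi : character chi := Hch _ (or_introl erefl).
case: (classic (a = 0)) => [->|Ha].
  by exists D; split => // x; rewrite lincomb_cons Hs mul0r add0r.
exists ((a, (chi, fun _ => 0)) :: D); split.
  move=> p /= [<-|HpD]; last by apply: HD.
  split => //=; first by apply: zero_char.
  move=> y Ny /=; have /eqP := Hv _ (or_introl erefl) y Ny.
  by rewrite /= mulf_eq0 => /orP [/eqP //|/eqP ->]; rewrite subr0.
by move=> x; rewrite lincomb_cons dsum_cons Hs subr0.
Qed.

End Aux.

Theorem mainTheorem2 (M : indMonoidLB) (N : pt M -> Prop) :
  commutative_im M -> split_wrt_L M -> submonoid N ->
  forall s : pt M -> Cplx,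
    ideal_IN N s <->
    exists l : seq (Cplx * ((pt M -> Cplx) * (pt M -> Cplx))),
      (forall p, List.In p l ->
         [/\ character p.2.1, character p.2.2 &
             vanishes_on N (fun x => p.2.1 x - p.2.2 x)]) /\
      s = lincomb [seq (p.1, fun x => p.2.1 x - p.2.2 x) | p <- l].
Proof.
move=> _ Hsplit HN s; split.
  move=> [Hsec Hvan].
  have [l [Hch Hs]] := Hsplit s Hsec.
  have [D [l' [HD Hl' Hp Hs']]] := @reduce M N l Hch.
  have Hz : forall x, N x -> lincomb l' x = 0.
    move=> x Nx; have := Hs' x; rewrite -Hs Hvan // (@dsum_van M N D HD x Nx) add0r.
    by move=> <-.
  have [D2 [HD2 Hs2]] := @finish M N l' Hl' (@artin M N HN l' Hl' Hp Hz).
  exists (D ++ D2); split.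
    by move=> p /In_cat [H|H]; [apply: HD|apply: HD2].
  change (s = dsum M (D ++ D2)).
  apply: functional_extensionality => x.
  by rewrite dsum_cat -Hs2 -Hs' Hs.
move=> [l [Hl ->]].
change (ideal_IN N (dsum M l)); split.
  by move=> g; apply: (@dsum_reg M N).
by move=> x Nx; apply: (@dsum_van M N).
Qed.
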